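(* Let $w\in S_n$ be fireworks. Then the Rajchgot code $\mathrm{rajcode}(w)=(r_1,\ldots,r_n)$ satisfies $r_n=0$ and, for $i<n$, $r_i=r_{i+1}$ if $w(i)<w(i+1)$ and $r_i=r_{i+1}+1$ if $w(i)>w(i+1)$.
   Context: Permutations are written in one-line notation. The decreasing runs of $w$ are the maximal consecutive decreasing segments of the one-line notation; $w$ is fireworks if the initial elements of its decreasing runs occur in increasing order. The Rajchgot code of $w\in S_n$ is $\mathrm{rajcode}(w)=(r_1,\ldots,r_n)$, where $r_j$ is defined as follows: choose an increasing subsequence of $w(j),w(j+1),\ldots,w(n)$ containing $w(j)$ of greatest length among all such subsequences, and let $r_j$ be the number of terms of $w(j),\ldots,w(n)$ omitted to form it. *)

(* Defs.v *)
From mathcomp Require Import all_boot all_order all_fingroup.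
Set Implicit Arguments. Unset Strict Implicit. Unset Printing Implicit Defensive.

(* Conventions: positions and values are 0-indexed, w : 'S_n acting on 'I_n;
   the one-line notation of w is w 0, w 1, ..., w (n-1). *)

(* Position i starts a decreasing run: i = 0 or w(i-1) < w(i). *)
Definition run_start n (w : 'S_n) (i : 'I_n) : bool :=
  [forall j : 'I_n, (j.+1 == i :> nat) ==> (w j < w i)].

Definition fireworks n (w : 'S_n) : Prop :=
  forall i j : 'I_n, run_start w i -> run_start w j -> i < j -> w i < w j.

(* S is (the set of positions of) an increasing subsequence of
   w(j), ..., w(n-1) containing the term w(j). *)
Definition incr_subseq_from n (w : 'S_n) (j : 'I_n) (S : {set 'I_n}) : bool :=
  [&& j \in S, [forall k in S, j <= k]
    & [forall a in S, forall b in S, (a < b) ==> (w a < w b)]].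

Definition lis_from n (w : 'S_n) (j : 'I_n) : nat :=
  \max_(S : {set 'I_n} | incr_subseq_from w j S) #|S|.

(* Rajchgot code entry r_j: number of terms of w(j),...,w(n-1) omitted. *)
Definition rajcode n (w : 'S_n) (j : 'I_n) : nat := (n - j) - lis_from w j.

(* Main.v *)
Require Import Defs.
From mathcomp Require Import all_boot all_order all_fingroup.
From mathcomp Require Import zify.
Set Implicit Arguments. Unset Strict Implicit. Unset Printing Implicit Defensive.

Definition cnt n (w : 'S_n) (i : 'I_n) :=
  #|[set k : 'I_n | (i < k) && run_start w k]|.

Lemma no_start_dec n (w : 'S_n) (p q : 'I_n) : p <= q ->
  (forall k : 'I_n, p < k -> k <= q -> ~~ run_start w k) -> w q <= w p.
Proof.
move=> pq H.
have [d ed] : exists d, (q : nat) = p + d by exists (q - p); rewrite subnKC.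
elim: d q ed pq H => [|d IH] q ed pq H.
  have -> : q = p by apply/val_inj; rewrite /= ed addn0.
  by [].
have qlt : p + d < n by have := ltn_ord q; lia.
set q' := Ordinal qlt.
have h1 : w q' <= w p.
  apply: (IH q') => //=; first by lia.
  move=> k a b; apply: H => //; rewrite ed /=; lia.
have hq : p < q.
  by rewrite ed; lia.
have := H q hq (leqnn _).
move/forallPn => [j]; rewrite negb_imply => /andP [/eqP hj]; rewrite -leqNgt => hle.
have ejq : j = q' by apply/val_inj => /=; lia.
subst j. exact: leq_trans hle h1.
Qed.

Lemma ub n (w : 'S_n) m : forall (i : 'I_n) (S : {set 'I_n}),
  #|S| <= m -> incr_subseq_from w i S -> #|S| <= (cnt w i).+1.
Proof.
elim: m => [|m IHm] i S hS.
  by move=> _; apply: leq_trans hS _.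
case/and3P => iS /forall_inP allge /forall_inP incr.
have cS : #|S| = (#|S :\ i|).+1 by rewrite (cardsD1 i S) iS.
case: (set_0Vmem (S :\ i)) => [S0 | [k0 k0S]].
  by rewrite cS S0 cards0.
case: (arg_minnP (fun k : 'I_n => (k : nat)) k0S) => k kS' kmin.
move: (kS') => /setD1P [kni kS].
have ik : i < k by rewrite ltn_neqAle allge // andbT; apply/eqP => /val_inj h; rewrite h eqxx in kni.
have wik : w i < w k by have := incr _ iS => /forall_inP /(_ _ kS); rewrite ik.
have IH : #|S :\ i| <= (cnt w k).+1.
  apply: (IHm k); first by rewrite -ltnS -cS.
  apply/and3P; split => //; first by apply/forall_inP.
  apply/forall_inP => a /setD1P [_ aS]; apply/forall_inP => b /setD1P [_ bS].
  by have := incr _ aS => /forall_inP /(_ _ bS).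
case: (boolP [exists m' : 'I_n, [&& i < m', m' <= k & run_start w m']]) => [/existsP [m' /and3P [h1 h2 h3]] | /existsPn hn]; last first.
  exfalso.
  have : w k <= w i.
    apply: no_start_dec; first exact: ltnW.
    move=> k' a b; have := hn k'; by rewrite a b.
  by rewrite leqNgt wik.
have : (cnt w k).+1 <= cnt w i.
  rewrite /cnt.
  have -> : (#|[set k' : 'I_n | (k < k') && run_start w k']|).+1 =
     #|m' |: [set k' : 'I_n | (k < k') && run_start w k']|.
    by rewrite cardsU1 inE ltnNge h2.
  apply: subset_leq_card; apply/subsetP => x; rewrite !inE => /orP [/eqP -> | /andP [a b]].
    by rewrite h1 h3.
  by rewrite b (ltn_trans ik a).
rewrite cS; lia.
Qed.

Lemma lb n (w : 'S_n) (i : 'I_n) : fireworks w ->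
  incr_subseq_from w i (i |: [set k : 'I_n | (i < k) && run_start w k]).
Proof.
move=> fw.
set z : 'I_n := Ordinal (leq_ltn_trans (leq0n i) (ltn_ord i)).
have Pz : (z <= i) && run_start w z.
  apply/andP; split => //; apply/forallP => j; apply/implyP => /eqP //.
case: (@arg_maxnP _ z (fun k : 'I_n => (k <= i) && run_start w k) (fun k : 'I_n => (k : nat)) Pz) => h /andP [hi hrs] hmax.
have wih : w i <= w h.
  apply: no_start_dec => // k a b; apply/negP => rk.
  by have := hmax k; rewrite b rk => /(_ isT) /=; rewrite leqNgt a.
apply/and3P; split; first exact: setU11.
  by apply/forall_inP => k; rewrite !inE => /orP [/eqP -> // | /andP [a _]]; exact: ltnW.
apply/forall_inP => a; rewrite !inE => aS; apply/forall_inP => b; rewrite !inE => bS.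
apply/implyP => ab.
case/orP: aS => [/eqP ea | /andP [ia ra]].
  subst a; case/orP: bS => [/eqP eb | /andP [ib rb]].
    by subst b; rewrite ltnn in ab.
  apply: leq_ltn_trans wih _; apply: fw => //; exact: leq_ltn_trans hi ib.
case/orP: bS => [/eqP eb | /andP [ib rb]].
  by subst b; have := ltn_trans ia ab; rewrite ltnn.
exact: fw.
Qed.

Lemma lisE n (w : 'S_n) (i : 'I_n) : fireworks w -> lis_from w i = (cnt w i).+1.
Proof.
move=> fw; apply/eqP; rewrite eqn_leq; apply/andP; split.
  apply/bigmax_leqP => S HS; exact: (@ub n w #|S|).
have := @leq_bigmax_cond _ _ (fun S : {set 'I_n} => #|S|) _ (lb i fw).
by rewrite cardsU1 inE ltnn.
Qed.

Lemma cnt_le n (w : 'S_n) (j : 'I_n) : cnt w j <= n - j.+1.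
Proof.
have hj : j.+1 <= n := ltn_ord j.
set B := [set widen_ord hj x | x in 'I_j.+1].
have cB : #|B| = j.+1.
  rewrite card_imset ?card_ord // => a b /(congr1 val) /= h; exact: val_inj.
have : [set k : 'I_n | (j < k) && run_start w k] \subset ~: B.
  apply/subsetP => k; rewrite !inE => /andP [jk _].
  apply/imsetP => [[x _ ekx]]; have := ltn_ord x; rewrite ekx /= in jk; lia.
move/subset_leq_card; rewrite /cnt; have := cardsCs B; rewrite cB card_ord.
move: (#|~: B|) => c; lia.
Qed.

Lemma cnt_step n (w : 'S_n) (i j : 'I_n) : j = i.+1 :> nat ->
  cnt w i = cnt w j + (w i < w j).
Proof.
move=> hj.
have rsj : run_start w j = (w i < w j).
  apply/forallP/idP => [H | H k]; first by have := H i; rewrite hj eqxx.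
  apply/implyP => /eqP hk; have -> : k = i by apply/val_inj; rewrite /=; lia.
  exact: H.
have E : forall k : 'I_n, (i < k) = (k == j) || (j < k).
  move=> k; rewrite -(inj_eq val_inj) /= hj; lia.
rewrite /cnt; case: (boolP (w i < w j)) => hw.
  rewrite -rsj in hw.
  have -> : [set k : 'I_n | (i < k) && run_start w k] =
            j |: [set k : 'I_n | (j < k) && run_start w k].
    apply/setP => k; rewrite !inE E; case: (eqVneq k j) => [-> | //].
    by rewrite hw ltnn.
  by rewrite cardsU1 inE ltnn addnC.
have -> : [set k : 'I_n | (i < k) && run_start w k] =
          [set k : 'I_n | (j < k) && run_start w k].
  apply/setP => k; rewrite !inE E; case: (eqVneq k j) => [-> | //].
  by rewrite ltnn rsj (negbTE hw).
by rewrite addn0.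
Qed.

Theorem lemma3p12 (n : nat) (w : 'S_n) :
  fireworks w ->
  (forall j : 'I_n, j.+1 = n -> rajcode w j = 0) /\
  (forall i j : 'I_n, j = i.+1 :> nat ->
     (w i < w j -> rajcode w i = rajcode w j) /\
     (w j < w i -> rajcode w i = (rajcode w j).+1)).
Proof.
move=> fw; split.
  move=> j hj; rewrite /rajcode lisE //; have := cnt_le w j; lia.
move=> i j hj; rewrite /rajcode !lisE // (cnt_step w hj).
have := cnt_le w j; have := ltn_ord j; split => hw.
  by rewrite hw; lia.
by rewrite ltnNge (ltnW hw) /=; lia.
Qed.
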